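(* Let $G_i=(V_i,E_i)$ be a graph of minimum degree $\delta_i$ and maximum degree $\Delta_i$, $i\in\{1,2\}$. For integers $k_1,k_2$, let $S_i$ be a $k_i$-oaf set in $G_i$, $i\in\{1,2\}$, and let $$k'=\max\{k_1-\delta_2,\;k_2-\delta_1,\;\min\{k_2+\Delta_1,\,k_1+\Delta_2\}\}.$$ Then for every integer $k\in\{k',\dots,\Delta_1+\Delta_2\}$, the set $(S_1\times V_2)\cup(V_1\times S_2)$ is a $k$-oaf set in $G_1\times G_2$.
   Context: All graphs are finite and simple. For a graph $G=(V,E)$, a set $S\subseteq V$ and $v\in V$, let $\delta_S(v)=|\{u\in S: uv\in E\}|$, $\overline{S}=V\setminus S$, and let $\partial S$ be the set of vertices of $\overline S$ adjacent to at least one vertex of $S$. For an integer $k$, a non-empty set $S\subseteq V$ is an offensive $k$-alliance if $\delta_S(v)\ge \delta_{\overline S}(v)+k$ for every $v\in \partial S$. A set $X\subseteq V$ is an offensive $k$-alliance free set ($k$-oaf set) if no offensive $k$-alliance $S$ satisfies $S\subseteq X$. The Cartesian product $G_1\times G_2$ of $G_1=(V_1,E_1)$, $G_2=(V_2,E_2)$ has vertex set $V_1\times V_2$, with $(a,b)$ adjacent to $(c,d)$ iff either $a=c$ and $bd\in E_2$, or $b=d$ and $ac\in E_1$. *)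

(* Defs.v *)
From HB Require Import structures.
From mathcomp Require Import all_boot all_order all_algebra.
Set Implicit Arguments. Unset Strict Implicit. Unset Printing Implicit Defensive.
Import Order.TTheory GRing.Theory Num.Theory.

(* A finite simple graph: vertex set a finType T, adjacency e : rel T,
   assumed symmetric and irreflexive (hypotheses in the theorem). *)

Section Graphs.
Variable T : finType.
Variable e : rel T.

Definition deg_in (S : {set T}) (v : T) : nat := #|[set u in S | e v u]|.
Definition deg (v : T) : nat := deg_in [set: T] v.

(* minimum / maximum degree (for an empty vertex set these are #|T| = 0 / 0) *)
Definition min_deg : nat := \big[minn/#|T|]_(v : T) deg v.
Definition max_deg : nat := \max_(v : T) deg v.

Definition boundary (S : {set T}) : {set T} :=
  [set v | (v \notin S) && [exists u in S, e v u]].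

Definition off_alliance (S : {set T}) (k : int) : Prop :=
  S != set0 /\
  forall v, v \in boundary S ->
    ((deg_in (~: S) v)%:Z + k <= (deg_in S v)%:Z)%R.

Definition k_oaf (X : {set T}) (k : int) : Prop :=
  forall S : {set T}, S \subset X -> ~ off_alliance S k.
End Graphs.

Definition cart_rel (T1 T2 : finType) (e1 : rel T1) (e2 : rel T2) : rel (T1 * T2) :=
  fun x y => ((x.1 == y.1) && e2 x.2 y.2) || ((x.2 == y.2) && e1 x.1 y.1).

(* Main.v *)
Require Import Defs.
From mathcomp Require Import all_boot all_order all_algebra.
From mathcomp Require Import zify.
Import Order.TTheory GRing.Theory Num.Theory.
Local Open Scope ring_scope.

Section Aux.
Variable T : finType.
Variable e : rel T.

Lemma deg_split (S : {set T}) v :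
  (deg_in e S v + deg_in e (~: S) v)%N = deg e v.
Proof.
rewrite /deg /deg_in -(cardsID S [set u in [set: T] | e v u]).
congr (_ + _)%N; apply: eq_card => u; rewrite !inE; by case: (u \in S); case: (e v u).
Qed.

Lemma deg_in_sub (A B : {set T}) v : A \subset B -> (deg_in e A v <= deg_in e B v)%N.
Proof.
move=> H; apply: subset_leq_card; apply/subsetP => u; rewrite !inE => /andP[/(subsetP H) -> ->].
done.
Qed.

Lemma deg_in0 v : deg_in e set0 v = 0%N.
Proof. rewrite /deg_in; apply/eqP; rewrite cards_eq0; apply/eqP/setP => u; rewrite !inE. done. Qed.

Lemma deg_le_max v : (deg e v <= max_deg e)%N.
Proof. by rewrite /max_deg (bigD1 v) //= leq_maxl. Qed.

Lemma min_le_deg v : (min_deg e <= deg e v)%N.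
Proof.
rewrite /min_deg.
have : v \in index_enum T by rewrite mem_index_enum.
elim: (index_enum T) => [|x r IH] //=.
rewrite big_cons inE => /orP[/eqP <-|/IH H]; first exact: geq_minl.
exact: leq_trans (geq_minr _ _) H.
Qed.
End Aux.
Arguments deg_in_sub {T} e {A B} v.
Arguments deg_le_max {T}.
Arguments min_le_deg {T}.
Arguments deg_in0 {T}.

Section Prod.
Variables (T1 T2 : finType) (e1 : rel T1) (e2 : rel T2).
Hypotheses (irr1 : irreflexive e1) (irr2 : irreflexive e2).

Lemma deg_cart (S : {set T1 * T2}) a b :
  deg_in (cart_rel e1 e2) S (a, b) =
  (deg_in e1 [set a' | (a', b) \in S] a + deg_in e2 [set b' | (a, b') \in S] b)%N.
Proof.
rewrite /deg_in.
set A := [set a' in [set a' | (a', b) \in S] | e1 a a'].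
set B := [set b' in [set b' | (a, b') \in S] | e2 b b'].
have memL : forall x y, ((x, y) \in (fun a' => (a', b)) @: A) = (y == b) && (x \in A).
  move=> x y; apply/imsetP/andP => [[a' Ha' [-> ->]]|[/eqP -> Hx]]; first by rewrite eqxx.
  by exists x.
have memR : forall x y, ((x, y) \in (fun b' => (a, b')) @: B) = (x == a) && (y \in B).
  move=> x y; apply/imsetP/andP => [[b' Hb' [-> ->]]|[/eqP -> Hy]]; first by rewrite eqxx.
  by exists y.
have -> : [set u in S | cart_rel e1 e2 (a, b) u] =
  (fun a' => (a', b)) @: A :|: (fun b' => (a, b')) @: B.
  apply/setP => [[x y]]; rewrite inE in_setU memL memR /A /B !inE /cart_rel /=.
  case: (eqVneq a x) => [<-|nax]; case: (eqVneq b y) => [<-|nby] /=;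
    rewrite ?irr1 ?irr2 ?andbF ?andbT ?orbF //=.
rewrite cardsU.
have -> : (fun a' => (a', b)) @: A :&: (fun b' => (a, b')) @: B = set0.
  apply/setP => [[x y]]; rewrite in_setI memL memR inE.
  case: (eqVneq x a) => [->|]; rewrite ?andbF //= /A !inE ?irr1 ?andbF //.
rewrite cards0 subn0 !card_imset //; by move=> ? ? [].
Qed.

Lemma slice_compl1 (S : {set T1 * T2}) b :
  [set a' | (a', b) \in ~: S] = ~: [set a' | (a', b) \in S].
Proof. by apply/setP => x; rewrite !inE. Qed.

Lemma slice_compl2 (S : {set T1 * T2}) a :
  [set b' | (a, b') \in ~: S] = ~: [set b' | (a, b') \in S].
Proof. by apply/setP => x; rewrite !inE. Qed.

Lemma case1 (k1 k2 : int) (S1 : {set T1}) (S2 : {set T2})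
  (H1 : k_oaf e1 S1 k1) (H2 : k_oaf e2 S2 k2) (k : int) (S : {set T1 * T2}) :
  k2 + Posz (max_deg e1) <= k -> k1 - Posz (min_deg e2) <= k ->
  S \subset [set x | (x.1 \in S1) || (x.2 \in S2)] ->
  ~ off_alliance (cart_rel e1 e2) S k.
Proof.
move=> hA hB sSX [nS0 Hall].
have Hrow : forall a, [set b | (a, b) \in S] != set0 -> a \in S1.
  move=> a ne; apply/negPn/negP => aS1.
  set Sa := [set b | (a, b) \in S].
  have sub : Sa \subset S2.
    apply/subsetP => b; rewrite inE => /(subsetP sSX); rewrite inE /= (negbTE aS1) //.
  have := H2 _ sub; rewrite /off_alliance.
  case: (boolP [exists b, (b \in boundary e2 Sa) &&
      ~~ ((deg_in e2 (~: Sa) b)%:Z + k2 <= (deg_in e2 Sa b)%:Z)]).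
  - case/existsP => b /andP[bB nle] _.
    move: bB; rewrite inE => /andP[bSa /existsP[b' /andP[b'S eb]]].
    have vB : (a, b) \in boundary (cart_rel e1 e2) S.
      rewrite inE; apply/andP; split; first by move: bSa; rewrite inE.
      apply/existsP; exists (a, b'); move: b'S; rewrite inE => ->.
      by rewrite /cart_rel /= eqxx eb.
    have := Hall _ vB.
    rewrite !deg_cart slice_compl2 -/Sa.
    have h1 := deg_in_sub e1 a (subsetT [set a1 | (a1, b) \in S]).
    have h2 := deg_le_max e1 a.
    rewrite /deg in h2.
    move: nle; rewrite -ltNge => nle.
    lia.
  - move=> /existsPn Hn; case; split => // b bB.
    by have := Hn b; rewrite bB /= negbK.
set P := [set a | [set b | (a, b) \in S] != set0].
have sP : P \subset S1 by apply/subsetP => a; rewrite inE; exact: Hrow.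
have := H1 _ sP; rewrite /off_alliance.
case: (boolP [exists a, (a \in boundary e1 P) &&
      ~~ ((deg_in e1 (~: P) a)%:Z + k1 <= (deg_in e1 P a)%:Z)]).
- case/existsP => a' /andP[aB nle] _.
  move: aB; rewrite inE => /andP[a'P /existsP[a /andP[aP ea]]].
  move: (aP); rewrite inE => /set0Pn[b]; rewrite inE => abS.
  move: a'P; rewrite inE negbK => /eqP row0.
  have vB : (a', b) \in boundary (cart_rel e1 e2) S.
    rewrite inE; apply/andP; split.
      apply/negP => H; have : b \in [set b | (a', b) \in S] by rewrite inE.
      by rewrite row0 inE.
    apply/existsP; exists (a, b); rewrite abS /cart_rel /= eqxx ea.
    by rewrite orbT.
  have := Hall _ vB.
  rewrite !deg_cart slice_compl2 row0 setC0 deg_in0 slice_compl1.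
  have h1 : (deg_in e1 [set a'0 | (a'0, b) \in S] a' <= deg_in e1 P a')%N.
    apply: deg_in_sub; apply/subsetP => x; rewrite !inE => H.
    by apply/set0Pn; exists b; rewrite inE.
  have h2 : (deg_in e1 (~: P) a' <= deg_in e1 (~: [set a'0 | (a'0, b) \in S]) a')%N.
    apply: deg_in_sub; apply/subsetP => x; rewrite !inE => H; apply/negP => H'.
    move: H; rewrite negbK => /eqP E; have : b \in [set b0 | (x, b0) \in S] by rewrite inE.
    by rewrite E inE.
  have h3 := min_le_deg e2 b.
  rewrite /deg in h3.
  move: nle; rewrite -ltNge => nle.
  lia.
- move=> /existsPn Hn; case; split.
    case/set0Pn: nS0 => [[a b] abS]; apply/set0Pn; exists a; rewrite inE.
    by apply/set0Pn; exists b; rewrite inE.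
  move=> a aB; by have := Hn a; rewrite aB /= negbK.
Qed.

End Prod.
Arguments deg_cart {T1 T2 e1 e2}.
Arguments case1 {T1 T2 e1 e2} irr1 irr2 {k1 k2 S1 S2} H1 H2 {k S}.

Lemma swap_alliance (T1 T2 : finType) (e1 : rel T1) (e2 : rel T2)
  (irr1 : irreflexive e1) (irr2 : irreflexive e2) (S : {set T1 * T2}) k :
  off_alliance (cart_rel e1 e2) S k ->
  off_alliance (cart_rel e2 e1) [set y | (y.2, y.1) \in S] k.
Proof.
move=> [nS0 Hall]; split.
  case/set0Pn: nS0 => [[a b] abS]; apply/set0Pn; exists (b, a); by rewrite inE.
move=> [b a]; rewrite inE => /andP[vS /existsP[[u1 u2] /andP[uS ev]]].
have vB : (a, b) \in boundary (cart_rel e1 e2) S.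
  rewrite inE; apply/andP; split; first by move: vS; rewrite inE.
  apply/existsP; exists (u2, u1); move: uS; rewrite inE => -> /=.
  by move: ev; rewrite /cart_rel /= orbC.
have := Hall _ vB.
rewrite (deg_cart irr1 irr2 S) (deg_cart irr1 irr2 (~: S)).
rewrite (@deg_cart T2 T1 e2 e1 irr2 irr1).
rewrite (@deg_cart T2 T1 e2 e1 irr2 irr1).
have E1 : [set b' | (b', a) \in [set y | (y.2, y.1) \in S]] = [set b' | (a, b') \in S].
  by apply/setP => x; rewrite !inE.
have E2 : [set a' | (b, a') \in [set y | (y.2, y.1) \in S]] = [set a' | (a', b) \in S].
  by apply/setP => x; rewrite !inE.
have E3 : [set b' | (b', a) \in ~: [set y | (y.2, y.1) \in S]] = [set b' | (a, b') \in ~: S].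
  by apply/setP => x; rewrite !inE.
have E4 : [set a' | (b, a') \in ~: [set y | (y.2, y.1) \in S]] = [set a' | (a', b) \in ~: S].
  by apply/setP => x; rewrite !inE.
rewrite E1 E2 E3 E4.
lia.
Qed.
Arguments swap_alliance {T1 T2 e1 e2} irr1 irr2 {S k}.

Theorem theorem4 (T1 T2 : finType) (e1 : rel T1) (e2 : rel T2)
  (sym1 : symmetric e1) (irr1 : irreflexive e1)
  (sym2 : symmetric e2) (irr2 : irreflexive e2)
  (k1 k2 : int) (S1 : {set T1}) (S2 : {set T2})
  (H1 : k_oaf e1 S1 k1) (H2 : k_oaf e2 S2 k2) (k : int) :
  let d1 := (Posz (min_deg e1)) in let d2 := (Posz (min_deg e2)) in
  let D1 := (Posz (max_deg e1)) in let D2 := (Posz (max_deg e2)) in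
  let k' := Num.max (k1 - d2) (Num.max (k2 - d1) (Num.min (k2 + D1) (k1 + D2)))%R in
  (k' <= k)%R -> (k <= D1 + D2)%R ->
  k_oaf (cart_rel e1 e2) [set x | (x.1 \in S1) || (x.2 \in S2)] k.
Proof.
move=> d1 d2 D1 D2 k' hk _ S sSX Hal.
move: hk; rewrite /k' !ge_max ge_min => /and3P[hB hC /orP[hA|hA]].
  exact: (case1 irr1 irr2 H1 H2 hA hB sSX Hal).
apply: (case1 irr2 irr1 H2 H1 hA hC _ (swap_alliance irr1 irr2 Hal)).
apply/subsetP => [[b a]]; rewrite !inE /= => /(subsetP sSX); rewrite inE /=.
by rewrite orbC.
Qed.
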